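(* Let $\mathcal{D}=(V,E)$ be a DAG with $n=|V|$ nodes, and let $\mathcal{U}$ be its unconditional dependence graph. Then $\mathcal{U}$ is equal to each of the following undirected graphs on $V$: (1) $\mathcal{U}_1=(V,\{\{v,w\}: v\neq w,\ \mathrm{an}_\mathcal{D}(v)\cap\mathrm{an}_\mathcal{D}(w)\neq\emptyset\})$, i.e. two distinct nodes are adjacent iff they have a common ancestor in $\mathcal{D}$; (2) $\mathcal{U}_2=\big(V,\bigcup_{m\in\mathrm{ma}_\mathcal{D}(V)}\{\{v,w\}: v,w\in\mathrm{de}_\mathcal{D}(m),\ v\neq w\}\big)$; (3) $\mathcal{U}_3=m(t(r(\mathcal{D})))$; (4) the graph $\mathcal{U}_4$ whose adjacency matrix is $a(T^\top T)$, where $T=\sum_{p=0}^{n-1}A_\mathcal{D}^p$.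
   Context: A DAG $\mathcal{D}=(V,E)$ has adjacency matrix $A_\mathcal{D}=[a_{v,w}]$ with $a_{v,w}=1$ iff $v\to w\in E$, else $0$ (identify $V$ with $[n]$). $\mathrm{an}_\mathcal{D}(v)$ and $\mathrm{de}_\mathcal{D}(v)$ denote the ancestors/descendants of $v$ (nodes with a directed path to/from $v$), with $v\in\mathrm{an}_\mathcal{D}(v)$ and $v\in\mathrm{de}_\mathcal{D}(v)$. $\mathrm{ma}_\mathcal{D}(V)$ is the set of source nodes of $\mathcal{D}$ (nodes with no parents). A collider on a path is a node $u$ with both incident path edges pointing into $u$; a trek is a path (no repeated vertices) with no collider. The unconditional dependence graph $\mathcal{U}^\mathcal{D}$ of $\mathcal{D}$ is the undirected graph on $V$ in which distinct $v,w$ are adjacent iff there is a trek between $v$ and $w$ in $\mathcal{D}$ (i.e. $v,w$ are d-connected given $\emptyset$). Operators: $r(\mathcal{D})$ reverses every edge of $\mathcal{D}$; $t(\mathcal{D})$ is the transitive closure (add $v\to w$ whenever there is a directed path from $v$ to $w$); $m(\mathcal{D})$ (moralization) adds an edge between every pair of nonadjacent nodes having a common child and then makes all edges undirected. For a symmetric matrix $M$, $a(M)$ is the $0/1$ matrix with $a(M)_{v,w}=1$ iff $v\neq w$ and $M_{v,w}\neq 0$. *)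

(* Defs.v *)
(* A DAG on V = 'I_n is given by its edge relation e : rel 'I_n
   (e v w <-> v -> w is an edge). *)
From mathcomp Require Import all_boot all_order all_algebra.
Set Implicit Arguments. Unset Strict Implicit. Unset Printing Implicit Defensive.
Import GRing.Theory Num.Theory.
Local Open Scope ring_scope.

Section DAG.
Variable n : nat.
Implicit Types (e : rel 'I_n) (v w u : 'I_n).

Definition acyclic e : Prop := forall v w, e v w -> ~~ connect e w v.

Definition is_ancestor e u v : bool := connect e u v.
Definition is_descendant e u v : bool := connect e v u.

Definition is_source e m : Prop := forall u, ~~ e u m.

Definition adjmx e : 'M[int]_n := \matrix_(v, w) (e v w)%:R.

(* a trek between v and w: a path x_0 = v, ..., x_k = w in the skeleton with
   no repeated vertices and no collider at the interior nodes. *)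
Definition is_trek e v w (s : seq 'I_n) : Prop :=
  let p := v :: s in
  [/\ uniq p, last v s = w,
      path (fun x y => e x y || e y x) v s &
      forall i, (0 < i)%N -> (i < size s)%N ->
        ~~ (e (nth v p i.-1) (nth v p i) && e (nth v p i.+1) (nth v p i))].

Definition udg e v w : Prop := v != w /\ exists s, is_trek e v w s.

Definition U1 e v w : Prop :=
  v != w /\ exists u, is_ancestor e u v && is_ancestor e u w.

Definition U2 e v w : Prop :=
  v != w /\ exists m, is_source e m /\ is_descendant e v m /\ is_descendant e w m.

Definition rev_dag e : rel 'I_n := fun x y => e y x.
Definition tclos e : rel 'I_n := fun x y => [exists z, e x z && connect e z y].
Definition moral e v w : Prop :=
  v != w /\ (e v w \/ e w v \/ exists c, e v c && e w c).

Definition U3 e v w : Prop := moral (tclos (rev_dag e)) v w.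

Definition amx (M : 'M[int]_n) v w : bool := (v != w) && (M v w != 0).
Definition Tmx e : 'M[int]_n := \sum_(p < n) (adjmx e) ^+ p.
Definition U4 e v w : Prop := amx ((Tmx e)^T *m Tmx e) v w.

End DAG.

(* Main.v *)
Require Import Defs.
From mathcomp Require Import all_boot all_order all_algebra.
Set Implicit Arguments. Unset Strict Implicit. Unset Printing Implicit Defensive.

Section Aux.
Variable n : nat.
Variable e : rel 'I_n.

Fixpoint nocoll (x : 'I_n) (s : seq 'I_n) : bool :=
  match s with
  | y :: s' => (match s' with z :: _ => ~~ (e x y && e z y) | [::] => true end)
               && nocoll y s'
  | [::] => true
  end.

Lemma nocollP v s :
  (forall i, (0 < i)%N -> (i < size s)%N ->
      ~~ (e (nth v (v :: s) i.-1) (nth v (v :: s) i) &&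
          e (nth v (v :: s) i.+1) (nth v (v :: s) i))) <-> nocoll v s.
Proof.
elim: s v => [|y s IH] v /=; first by split=> // _ [|i].
split.
- move=> H; apply/andP; split.
  + case: s H IH => [|z s] H IH //; exact: (H 1%N).
  + apply/IH => i i0 isz; have := H i.+1 (ltn0Sn _) isz.
    case: i i0 isz => [|i] //= i0 isz.
    rewrite (set_nth_default y v (ltnW isz)) (set_nth_default y v isz).
    have hi : i < size (y :: s) by rewrite /= ltnS; apply: ltnW; apply: ltnW.
    by rewrite (set_nth_default y v hi).
- case/andP=> H1 /IH H2 [|[|i]] //= _.
  + by clear IH; case: s H1 H2 => [|z s] //=.
  + rewrite ltnS => isz; have := H2 i.+1 (ltn0Sn _) isz => /=.
    rewrite (set_nth_default y v (ltnW isz)) (set_nth_default y v isz).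
    have hi : i < size (y :: s) by rewrite /= ltnS; apply: ltnW; apply: ltnW.
    by rewrite (set_nth_default y v hi).
Qed.

Lemma skel_sym x y : (e x y || e y x) = (e y x || e x y).
Proof. by rewrite orbC. Qed.

Lemma nocoll_top x s : path (fun a b => e a b || e b a) x s -> nocoll x s ->
  exists t, connect e t x && connect e t (last x s).
Proof.
have H : forall x s, path (fun a b => e a b || e b a) x s -> nocoll x s ->
  (e x (head x s) -> connect e x (last x s)) /\
  exists t, connect e t x && connect e t (last x s).
  move=> {}x {}s; elim: s x => [|y s IH] x /=.
    by move=> _ _; split=> [_|]; [exact: connect0 | exists x; rewrite connect0].
  case/andP=> exy /[dup] ps /IH {}IH /andP[c /IH [IH1 [t /andP[t1 t2]]]].
  have fw : e x y -> connect e x (last y s).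
    move=> exy'; apply: connect_trans (connect1 exy') _.
    case: s ps c IH1 t2 {IH} => [|z s] /=; first by rewrite connect0.
    case/andP=> eyz _ nc IH1 _; apply: IH1.
    by move: eyz nc; rewrite exy' /= => /orP[//|->].
  split=> //.
  case exy': (e x y); first by exists x; rewrite connect0 fw.
  rewrite exy' /= in exy.
  by exists t; rewrite t2 (connect_trans t1 (connect1 exy)).
by move=> ps nc; case: (H x s ps nc).
Qed.

Hypothesis acyc : acyclic e.

Lemma acyc_asym x y : e x y -> e y x = false.
Proof. by move=> exy; apply/negbTE/negP=> eyx; move: (acyc exy); rewrite connect1. Qed.

Lemma nocoll_fwd x s : path e x s -> nocoll x s.
Proof.
elim: s x => [|y s IH] x //= /andP[exy ps]; rewrite IH // andbT.
case: s ps {IH} => [|z s] //= /andP[eyz _].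
by rewrite (acyc_asym eyz) andbF.
Qed.

Lemma nocoll_cat x a b : path (fun u w => e w u) x a -> path e (last x a) b ->
  nocoll x (a ++ b).
Proof.
elim: a x => [|y a IH] x /=; first by move=> _; exact: nocoll_fwd.
case/andP=> eyx pa pb; rewrite IH // andbT.
case: (a ++ b) => // z _; by rewrite (acyc_asym eyx).
Qed.


Lemma trek_build t l r : path e t l -> path e t r ->
  uniq (t :: l) -> uniq (t :: r) -> ~~ has (mem l) r ->
  is_trek e (last t l) (last t r) (rev (belast t l) ++ r).
Proof.
move=> pl pr ul ur dis.
have hv : (last t l) :: (rev (belast t l) ++ r) = rev (t :: l) ++ r.
  by rewrite [t :: l]lastI rev_rcons.
have hlast : last (last t l) (rev (belast t l)) = t.
  by case: (l) => //= y l'; rewrite rev_cons last_rcons.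
split.
- rewrite hv cat_uniq rev_uniq ul /=; move: ur => /= /andP[tr ->]; rewrite andbT.
  apply/hasPn => x xr; rewrite mem_rev inE negb_or; apply/andP; split.
    by apply: contraNneq tr => <-.
  by apply: contra dis => xl; apply/hasP; exists x.
- by rewrite last_cat hlast.
- rewrite cat_path hlast; apply/andP; split.
    rewrite rev_path; apply: sub_path pl => a b ->; by rewrite orbT.
  by apply: sub_path pr => a b ->.
- apply/nocollP; apply: nocoll_cat; last by rewrite hlast.
  by rewrite rev_path.
Qed.

Lemma trek_of_ca t v w : connect e t v -> connect e t w -> exists s, is_trek e v w s.
Proof.
move=> /connectP [l0 pl0 ->] /connectP [r0 pr0 ->].
case: (shortenP pl0) => l pl ul _; case: (shortenP pr0) => r pr ur _.
have [k hk] : exists k, size l + size r <= k by exists (size l + size r).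
clear pl0 pr0; elim: k t l r pl ul pr ur hk => [|k IH] t l r pl ul pr ur hk.
  case: l r {pl ul pr ur} hk => [|? ?] [|? ?] // _; by exists [::]; split.
case dis: (has (mem l) r); last first.
  by exists (rev (belast t l) ++ r); apply: trek_build => //; rewrite dis.
case/hasP: dis => x xr xl.
case/splitPr: xl pl ul hk => l1 l2.
case/splitPr: xr pr ur => r1 r2 pr ur pl ul hk.
rewrite !last_cat /=.
move: pl pr; rewrite !cat_path /= => /and3P[_ _ pl2] /and3P[_ _ pr2].
apply: (IH x l2 r2) => //.
- by move: ul; rewrite -cat_cons cat_uniq => /and3P[_ _].
- by move: ur; rewrite -cat_cons cat_uniq => /and3P[_ _].
- move: hk; rewrite !size_cat /= !addnS !addSn ltnS; apply: leq_trans.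
  by apply: leqW; apply: leq_add; apply: leq_addl.
Qed.


Lemma source_anc u : exists m, is_source e m /\ connect e m u.
Proof.
have [k hk] : exists k, (#|[pred x | connect e x u]| <= k)%N by exists #|[pred x | connect e x u]|.
elim: k u hk => [|k IH] u hk.
  have h : (0 < #|[pred x | connect e x u]|)%N.
    by apply/card_gt0P; exists u; rewrite inE connect0.
  by move: hk; rewrite leqNgt h.
case: (boolP [exists x, e x u]).
  case/existsP=> p epu.
  have lt : (#|[pred x | connect e x p]| < #|[pred x | connect e x u]|)%N.
    apply: proper_card; apply/properP; split.
      by apply/subsetP=> x; rewrite !inE => c; apply: connect_trans c (connect1 epu).
    by exists u; rewrite !inE ?connect0 // (negbTE (acyc epu)).
  have [m [sm cm]] := IH p (leq_trans lt hk).
  by exists m; split=> //; apply: connect_trans cm (connect1 epu).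
rewrite negb_exists => /forallP h; exists u; split; last exact: connect0.
by move=> x; exact: h.
Qed.

Lemma tclos_rev x y : tclos (rev_dag e) x y = (y != x) && connect e y x.
Proof.
have cr : forall a b, connect (rev_dag e) a b = connect e b a.
  by move=> a b; exact: connect_rev.
apply/existsP/andP.
  case=> z /andP[ezx]; rewrite cr => cyz; rewrite /rev_dag in ezx.
  have cyx := connect_trans cyz (connect1 ezx).
  split=> //; apply/eqP => yx; move: cyz; rewrite yx => cxz.
  by move: (acyc ezx); rewrite cxz.
case=> yx /connectP [q pq xq].
case/lastP: q pq xq => [|q z] pq xq; first by rewrite xq eqxx in yx.
rewrite last_rcons in xq; move: pq; rewrite rcons_path => /andP[pq ez].
exists (last y q); rewrite /rev_dag xq ez /= cr.
by apply/connectP; exists q.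
Qed.

End Aux.

Import GRing.Theory Num.Theory.
Section Mx.
Local Open Scope ring_scope.
Variable n : nat.
Variable e : rel 'I_n.

Lemma sum_nz (I : finType) (F : I -> int) : (forall i, 0 <= F i) ->
  (\sum_i F i != 0) <-> exists i, F i != 0.
Proof.
move=> F0; split.
  move/eqP/(psumr_neq0P (fun i _ => F0 i)) => [i /andP[_ Fi]].
  by exists i; rewrite lt0r_neq0.
case=> i Fi; apply/eqP => /(psumr_eq0P (fun i _ => F0 i)) /(_ i isT) Fi0.
by rewrite Fi0 eqxx in Fi.
Qed.

Fixpoint walk (p : nat) (u x : 'I_n) : bool :=
  if p is p'.+1 then [exists z, e u z && walk p' z x] else u == x.

Lemma mxpow_entry p u x : 0 <= (adjmx e ^+ p) u x /\
  ((adjmx e ^+ p) u x != 0 <-> walk p u x).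
Proof.
elim: p u x => [|p IH] u x.
  rewrite expr0 /= mxE; case: (u == x) => /=; split => //.
rewrite exprS -mulmxE mxE /=.
have h0 : forall z, 0 <= adjmx e u z * (adjmx e ^+ p) z x.
  by move=> z; apply: mulr_ge0; [rewrite mxE ler0n | case: (IH z x)].
split; first by apply: sumr_ge0 => z _; exact: h0.
apply: iff_trans (sum_nz h0) _; split.
  case=> z; rewrite mulf_eq0 negb_or mxE => /andP[ez /(proj2 (IH z x))].
  by move=> w; apply/existsP; exists z; case: (e u z) ez w.
case/existsP=> z /andP[ez w]; exists z.
by rewrite mulf_eq0 negb_or mxE ez /=; apply/(proj2 (IH z x)).
Qed.

Lemma walk_connect p u x : walk p u x -> connect e u x.
Proof.
elim: p u => [|p IH] u /=; first by move/eqP->; exact: connect0.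
by case/existsP=> z /andP[ez /IH]; apply: connect_trans; exact: connect1.
Qed.

Lemma path_walk u q : path e u q -> walk (size q) u (last u q).
Proof.
elim: q u => [|y q IH] u /=; first by rewrite eqxx.
by case/andP=> euy /IH w; apply/existsP; exists y; rewrite euy.
Qed.

Lemma Tmx_entry u x : 0 <= Tmx e u x /\ (Tmx e u x != 0 <-> connect e u x).
Proof.
rewrite /Tmx summxE.
have h0 : forall p : 'I_n, 0 <= (adjmx e ^+ p) u x by move=> p; case: (mxpow_entry p u x).
split; first by apply: sumr_ge0 => p _; exact: h0.
apply: iff_trans (sum_nz h0) _; split.
  by case=> p /(proj1 (proj2 (mxpow_entry p u x))); apply: walk_connect.
case/connectP=> q0 pq0 ->; case: (shortenP pq0) => q pq uq _.
have hs : (size q < n)%N.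
  have := max_card (mem (u :: q)); rewrite card_ord (card_uniqP uq) /=.
  by [].
exists (Ordinal hs); apply/(proj2 (mxpow_entry _ u _)); exact: path_walk.
Qed.

Lemma U4_iff v w : U4 e v w <-> v != w /\ exists u, connect e u v && connect e u w.
Proof.
rewrite /U4 /amx mxE.
have h0 : forall j, 0 <= (Tmx e)^T v j * Tmx e j w.
  by move=> j; rewrite mxE; apply: mulr_ge0; [case: (Tmx_entry j v)|case: (Tmx_entry j w)].
split.
  case/andP=> vw /(sum_nz h0) [u]; rewrite mulf_eq0 negb_or mxE.
  case/andP=> /(proj1 (proj2 (Tmx_entry _ _))) c1 /(proj1 (proj2 (Tmx_entry _ _))) c2.
  by split=> //; exists u; rewrite c1 c2.
case=> vw [u /andP[c1 c2]]; rewrite vw /=; apply/(sum_nz h0); exists u.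
rewrite mulf_eq0 negb_or mxE.
by apply/andP; split; apply/(proj2 (proj2 (Tmx_entry _ _))).
Qed.

End Mx.

Theorem theorem2p2 (n : nat) (e : rel 'I_n) :
  acyclic e ->
  (forall v w : 'I_n, udg e v w <-> U1 e v w) /\
  (forall v w : 'I_n, udg e v w <-> U2 e v w) /\
  (forall v w : 'I_n, udg e v w <-> U3 e v w) /\
  (forall v w : 'I_n, udg e v w <-> U4 e v w).
Proof.
move=> acyc.
have k1 : forall v w : 'I_n, udg e v w <-> U1 e v w.
  move=> v w; split.
    case=> vw [s [_ lst pth nc]].
    have [t ht] := @nocoll_top _ e v s pth (proj1 (@nocollP _ e v s) nc).
    by split=> //; exists t; rewrite -lst.
  case=> vw [t /andP[c1 c2]]; split=> //; exact: (trek_of_ca acyc c1 c2).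
have k2 : forall v w : 'I_n, U1 e v w <-> U2 e v w.
  move=> v w; split.
    case=> vw [t /andP[c1 c2]]; have [m [sm cm]] := source_anc acyc t.
    split=> //; exists m; split=> //; split; exact: connect_trans cm _.
  case=> vw [m [_ [c1 c2]]]; split=> //; exists m; exact/andP.
have k3 : forall v w : 'I_n, U1 e v w <-> U3 e v w.
  move=> v w; rewrite /U3 /moral !(tclos_rev acyc); split.
    case=> vw [t /andP[c1 c2]]; split=> //; rewrite /is_ancestor in c1 c2.
    have [tv|tv] := eqVneq t v.
      by right; left; rewrite vw -tv c2.
    have [tw|tw] := eqVneq t w.
      by left; rewrite -tw tv c1.
    by right; right; exists t; rewrite !(tclos_rev acyc) tv tw c1 c2.
  case=> vw [/andP[_ c]|[/andP[_ c]|[t]]]; last first.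
    rewrite !(tclos_rev acyc) => /andP[/andP[_ c1] /andP[_ c2]].
    by split=> //; exists t; rewrite /is_ancestor c1 c2.
  1,2: split=> //.
    by exists v; rewrite /is_ancestor c connect0.
    by exists w; rewrite /is_ancestor c connect0.
split; first exact: k1.
split; first by move=> v w; apply: iff_trans (k1 v w) (k2 v w).
split; first by move=> v w; apply: iff_trans (k1 v w) (k3 v w).
move=> v w; apply: iff_trans (k1 v w) _; apply: iff_sym; apply: iff_trans (U4_iff e v w) _.
by split; case=> vw [u h]; split=> //; exists u.
Qed.
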